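(* Let $\mathcal M$ be an oriented matroid program of rank $r$ on $[n]\cup\{f,g\}$ with digraph $K_f$, and let $\tilde v$ be a node of $K_f$ that is neither the source nor the sink of $K_f$. Then for each $e\in\tilde v$ there is a cocircuit $Y^{e}$ of $\mathcal M/\{f,g\}$ with $Y^{e}_e=+$ and $Y^e_{e'}\in\{+,0\}$ for all $e'\in\tilde v$. Consequently the composition of the $Y^e$, $e\in\tilde v$, is a covector of $\mathcal M/\{f,g\}$ that is positive on every element of $\tilde v$.
   Context: Oriented matroid conventions: covectors, cocircuits, vectors, circuits, deletion $\setminus$, contraction $/$, rank are as usual; $\underline Y$ is the support; composition $(X\circ Y)_e=X_e$ if $X_e\ne0$, else $Y_e$. A covector is nonnegative if all entries are in $\{+,0\}$. Oriented matroid program: $\mathcal M$ is an oriented matroid of rank $r$ on $E=[n]\cup\{f,g\}$ such that (a) every nonnegative cocircuit $Y$ of $\mathcal M\setminus f$ has $Y_g\neq 0$; (b) for every $e\in[n]$ there is a nonnegative cocircuit $Y$ of $\mathcal M\setminus f$ with $Y_e=+$; (c) every circuit of $\mathcal M$ whose support contains $f$ has support of size $r+1$. Nodes: the sets $v=[n]\setminus\underline Y$, $Y$ a nonnegative cocircuit of $\mathcal M\setminus f$. For each node $v$ let $Y^v$ be the cocircuit of $\mathcal M$ that is nonnegative on $E\setminus\{f\}$, has $Y^v_f\neq0\neq Y^v_g$, and zero set $v$ in $[n]$. Distinct nodes $v,v'$ are adjacent if $v\cap v'$ has rank $r-2$ in $\mathcal M$. For adjacent $v,v'$, let $Y''$ be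 the cocircuit of $\mathcal M$ obtained by eliminating $g$ between $Y^v$ and $-Y^{v'}$; it has $Y''_g=0$, vanishes on $v\cap v'$, is $+$ on $v'\setminus v$, $-$ on $v\setminus v'$, and $Y''_f\ne 0$. $K_f$: arc from $v$ to $v'$ if $Y''_f=Y''_e$ for $e\in v\setminus v'$, otherwise from $v'$ to $v$; it has a unique source and a unique sink. *)

(* Defs.v *)
From HB Require Import structures.
From mathcomp Require Import all_boot.
Set Implicit Arguments. Unset Strict Implicit. Unset Printing Implicit Defensive.

Inductive sign := Zero | Pos | Neg.

Definition sign_code (s : sign) : 'I_3 :=
  match s with Zero => inord 0 | Pos => inord 1 | Neg => inord 2 end.
Definition sign_decode (i : 'I_3) : sign :=
  match val i with 0 => Zero | 1 => Pos | _ => Neg end.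
Lemma sign_codeK : cancel sign_code sign_decode.
Proof. by case; rewrite /sign_decode /= inordK. Qed.
HB.instance Definition _ := Finite.copy sign (can_type sign_codeK).

Definition sopp (s : sign) : sign :=
  match s with Zero => Zero | Pos => Neg | Neg => Pos end.
Definition smul (s t : sign) : sign :=
  match s, t with
  | Zero, _ | _, Zero => Zero
  | Pos, Pos | Neg, Neg => Pos
  | _, _ => Neg end.

Section SignVectors.
Variable E : finType.

Definition svec := {ffun E -> sign}.

Definition szero : svec := [ffun _ => Zero].
Definition sneg (X : svec) : svec := [ffun e => sopp (X e)].
Definition compose (X Y : svec) : svec :=
  [ffun e => if X e == Zero then Y e else X e].
Definition supp (X : svec) : {set E} := [set e | X e != Zero].
(** restriction to E \ A, represented by zeroing the entries in A *)
Definition restr (A : {set E}) (X : svec) : svec :=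
  [ffun e => if e \in A then Zero else X e].
Definition nonneg (X : svec) : bool := [forall e, X e != Neg].

(** Cocircuit axioms for an oriented matroid on E (Bjorner et al., 3.2.1,
    applied to the set of cocircuits). *)
Definition is_OM (C : {set svec}) : Prop :=
  [/\ szero \notin C,
      forall X, X \in C -> sneg X \in C,
      forall X Y, X \in C -> Y \in C -> supp X \subset supp Y ->
                  X = Y \/ X = sneg Y &
      forall X Y e, X \in C -> Y \in C -> X != sneg Y ->
        X e = Pos -> Y e = Neg ->
        exists2 Z, Z \in C &
          Z e = Zero /\
          forall x, (Z x = Pos -> X x = Pos \/ Y x = Pos) /\
                    (Z x = Neg -> X x = Neg \/ Y x = Neg)].

Definition covector (C : {set svec}) (X : svec) : Prop :=
  exists2 s : seq svec, all (fun Y => Y \in C) s & X = foldr compose szero s.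

Definition orth (X Y : svec) : bool :=
  (supp X :&: supp Y == set0) ||
  ([exists e, smul (X e) (Y e) == Pos] && [exists e, smul (X e) (Y e) == Neg]).

Definition is_vector (C : {set svec}) (X : svec) : bool :=
  [forall Y in C, orth X Y].
Definition circuits (C : {set svec}) : {set svec} :=
  [set X | [&& X != szero, is_vector C X &
     [forall Y, ((Y != szero) && is_vector C Y && (supp Y \subset supp X))
                 ==> (supp Y == supp X)]]].

Definition indep (C : {set svec}) (B : {set E}) : bool :=
  [forall X in circuits C, ~~ (supp X \subset B)].
Definition rank (C : {set svec}) (A : {set E}) : nat :=
  \max_(B : {set E} | (B \subset A) && indep C B) #|B|.

Definition deletion (C : {set svec}) (A : {set E}) : {set svec} :=
  let R := [set restr A Y | Y in C] in
  [set X in R | (X != szero) &&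
     [forall Y in R, ((Y != szero) && (supp Y \subset supp X))
                      ==> (supp Y == supp X)]].

Definition contraction (C : {set svec}) (A : {set E}) : {set svec} :=
  [set Y in C | [forall e in A, Y e == Zero]].

End SignVectors.

Section Program.
Variables (E : finType) (f g : E) (C : {set svec E}) (r : nat).

Definition ground_n : {set E} := [set e | (e != f) && (e != g)].

Definition del_f : {set svec E} := deletion C [set f].

Definition OM_program : Prop :=
  [/\ is_OM C, rank C setT = r,
      forall Y, Y \in del_f -> nonneg Y -> Y g != Zero,
      forall e, e \in ground_n ->
                  exists2 Y, Y \in del_f & nonneg Y /\ Y e = Pos &
      forall X, X \in circuits C -> f \in supp X ->
                  #|supp X| = r.+1].

Definition is_node (v : {set E}) : Prop :=
  exists2 Y, Y \in del_f & nonneg Y /\ v = ground_n :\: supp Y.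

Definition is_Yv (v : {set E}) (Y : svec E) : Prop :=
  [/\ Y \in C, forall e, e != f -> Y e != Neg, Y f != Zero, Y g != Zero &
      forall e, e \in ground_n -> (Y e == Zero) = (e \in v)].

Definition adjacent (v v' : {set E}) : Prop :=
  [/\ is_node v, is_node v', v != v' & rank C (v :&: v') = r - 2].

Definition is_elim (X Y Z : svec E) : Prop :=
  [/\ Z \in C, Z g = Zero &
      forall x, (Z x = Pos -> X x = Pos \/ Y x = Pos) /\
                (Z x = Neg -> X x = Neg \/ Y x = Neg)].

Definition arc_cond (v v' : {set E}) : Prop :=
  exists Yv Yv' Z, [/\ is_Yv v Yv, is_Yv v' Yv', is_elim Yv (sneg Yv') Z &
                       forall e, e \in v :\: v' -> Z f = Z e].

(** arcs of K_f: for adjacent v, v', arc v -> v' if the test holds for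
    (v, v'), otherwise v' -> v *)
Definition arc (v v' : {set E}) : Prop :=
  adjacent v v' /\ (arc_cond v v' \/ ~ arc_cond v' v).

Definition is_source (v : {set E}) : Prop :=
  is_node v /\ forall w, ~ arc w v.
Definition is_sink (v : {set E}) : Prop :=
  is_node v /\ forall w, ~ arc v w.

End Program.

(* Main.v *)
Require Import Defs.
From mathcomp Require Import all_boot zify.
From Stdlib Require Import Classical.
Set Implicit Arguments. Unset Strict Implicit. Unset Printing Implicit Defensive.


Definition sbeq (s t : sign) := match s, t with
 | Zero, Zero | Pos, Pos | Neg, Neg => true | _, _ => false end.
Lemma sgE (s t : sign) : (s == t) = sbeq s t.
Proof. by apply/eqP/idP; case: s; case: t. Qed.

Lemma sopp_inv (s : sign) : sopp (sopp s) = s. Proof. by case: s. Qed.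
Lemma sopp_neq (s : sign) : s != Zero -> sopp s != s. Proof. by rewrite !sgE; case: s. Qed.
Lemma sopp_zero (s : sign) : (sopp s == Zero) = (s == Zero). Proof. by rewrite !sgE; case: s. Qed.

Section OMlemmas.
Variables (E : finType) (C : {set svec E}).
Hypothesis HOM : is_OM C.

Lemma snegE (X : svec E) x : sneg X x = sopp (X x). Proof. by rewrite ffunE. Qed.
Lemma sneg_inv (X : svec E) : sneg (sneg X) = X.
Proof. by apply/ffunP => x; rewrite !snegE sopp_inv. Qed.
Lemma suppE (X : svec E) x : (x \in supp X) = (X x != Zero). Proof. by rewrite inE. Qed.
Lemma supp_sneg (X : svec E) : supp (sneg X) = supp X.
Proof. by apply/setP => x; rewrite !suppE snegE sopp_zero. Qed.

Lemma inC_neg (X : svec E) : X \in C -> sneg X \in C.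
Proof. by case: HOM => _ H _ _; apply: H. Qed.

Lemma C_supp (X Y : svec E) : X \in C -> Y \in C -> supp X \subset supp Y -> X = Y \/ X = sneg Y.
Proof. by case: HOM => _ _ H _; apply: H. Qed.

Lemma C_nz (X : svec E) : X \in C -> exists x, X x != Zero.
Proof.
case: HOM => H0 _ _ _ XC; apply: NNPP => H.
have : X = szero E by apply/ffunP => x; rewrite ffunE; apply/eqP; apply: NNPP => Hx; apply: H; exists x; apply/negP.
by move=> eX; rewrite -eX XC in H0.
Qed.

Definition conf (P Q V : svec E) := forall x, V x = Zero \/ V x = P x \/ V x = Q x.

Lemma conf_of_elim (P Q Z : svec E) :
  (forall x, (Z x = Pos -> P x = Pos \/ Q x = Pos) /\ (Z x = Neg -> P x = Neg \/ Q x = Neg)) ->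
  conf P Q Z.
Proof.
move=> H x; case: (H x) => H1 H2; case hz: (Z x); first by left.
- by case: (H1 hz) => ->; right; [left|right].
- by case: (H2 hz) => ->; right; [left|right].
Qed.

Lemma elim_of_conf (P Q Z : svec E) : conf P Q Z ->
  forall x, (Z x = Pos -> P x = Pos \/ Q x = Pos) /\ (Z x = Neg -> P x = Neg \/ Q x = Neg).
Proof.
move=> H x; split => hz; case: (H x) => [|[]]; rewrite hz => //; by [left|right].
Qed.

Lemma conf_sym (P Q V : svec E) : conf P Q V -> conf Q P V.
Proof. by move=> H x; case: (H x) => [|[]]; auto. Qed.

Lemma conf_neg (P Q V : svec E) : conf P Q V -> conf (sneg P) (sneg Q) (sneg V).
Proof. by move=> H x; rewrite !snegE; case: (H x) => [|[]] ->; auto. Qed.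

Lemma conf_zero (P Q V : svec E) x : conf P Q V -> P x = Zero -> Q x = Zero -> V x = Zero.
Proof. by move=> H hp hq; case: (H x) => [|[]] ->. Qed.

Lemma conf_supp (P Q V : svec E) : conf P Q V -> supp V \subset supp P :|: supp Q.
Proof.
move=> H; apply/subsetP => x; rewrite !inE => hv.
case: (H x) => [e|[e|e]]; rewrite e in hv; [by rewrite eqxx in hv | by rewrite hv | by rewrite hv orbT].
Qed.

Lemma weak' (P Q : svec E) a : P \in C -> Q \in C -> P != sneg Q -> P a != Zero -> Q a = sopp (P a) ->
  exists2 Z, Z \in C & Z a = Zero /\ conf P Q Z.
Proof.
case: HOM => _ _ _ Hel PC QC PQ Pa Qa.
case hP: (P a) Pa Qa.
- by rewrite eqxx.
all: move=> _ Qa.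
- have [Z ZC [Za HZ]] := Hel P Q a PC QC PQ hP Qa.
  by exists Z => //; split => //; apply: conf_of_elim.
- have QP : Q != sneg P.
    apply/negP => /eqP e; move/negP: PQ; apply; by rewrite e sneg_inv.
  have [Z ZC [Za HZ]] := Hel Q P a QC PC QP Qa hP.
  by exists Z => //; split => //; apply/conf_sym/conf_of_elim.
Qed.

Definition msz (P Q : svec E) := #|supp P :|: supp Q|.

Definition SEB_lt n := forall P Q a k, msz P Q < n -> P \in C -> Q \in C ->
  P a != Zero -> Q a = sopp (P a) -> P k != Zero -> Q k = Zero ->
  exists2 V, V \in C & [/\ V a = Zero, V k != Zero & conf P Q V].

Lemma card_lt_sub (A B : {set E}) x : A \subset B :\ x -> x \in B -> #|A| < #|B|.
Proof.
move=> sAB xB; rewrite (cardsD1 x B) xB add1n ltnS; exact: subset_leq_card.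
Qed.

Definition bad (P Q U : svec E) : {set E} :=
  [set x | [&& U x != Zero, U x != P x & U x != Q x]].

Lemma fixup n (IH : SEB_lt n) (P Q Z : svec E) a k :
  msz P Q <= n -> P a != Zero -> Z \in C -> Z a = Zero -> Z k = Zero -> conf P Q Z ->
  forall U, U \in C -> U a = Zero -> U k != Zero ->
  (forall x, U x = Zero \/ U x = P x \/ U x = Q x \/ U x = sopp (Z x)) ->
  exists2 V, V \in C & [/\ V a = Zero, V k != Zero & conf P Q V].
Proof.
move=> hsz Pa ZC Za Zk cZ U.
move: {2}#|bad P Q U| (leqnn #|bad P Q U|) => m; elim: m U.
  move=> U; rewrite leqn0 cards_eq0 => /eqP b0 UC Ua Uk H4; exists U => //; split => // x.
  have : x \notin bad P Q U by rewrite b0 inE.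
  rewrite inE; case: (U x =P Zero) => [->|_]; first by left.
  case: (U x =P P x) => [->|_]; first by right; left.
  by case: (U x =P Q x) => [->|_] //; right; right.
move=> m IHm U hb UC Ua Uk H4.
case: (set_0Vmem (bad P Q U)) => [b0|[b bb]].
  by apply: (IHm U) => //; rewrite b0 cards0.
move: (bb); rewrite inE => /and3P [Ub1 Ub2 Ub3].
have Ub : U b = sopp (Z b).
  by case: (H4 b) => [e|[e|[e|//]]]; rewrite e eqxx in Ub1 Ub2 Ub3.
have Zb : Z b = sopp (U b) by rewrite Ub sopp_inv.
have hsupU : supp U \subset supp P :|: supp Q.
  apply/subsetP => x; rewrite !inE => Ux.
  case: (H4 x) => [e|[e|[e|e]]]; rewrite e in Ux.
  - by rewrite eqxx in Ux.
  - by rewrite Ux.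
  - by rewrite Ux orbT.
  - rewrite sopp_zero in Ux.
    by move: (conf_supp cZ) => /subsetP /(_ x); rewrite !inE; apply.
have hsz' : msz U Z < n.
  apply: (leq_trans _ hsz); apply: (card_lt_sub (x := a)); last by rewrite !inE Pa.
  apply/subsetP => x; rewrite !inE => /orP [] hx.
  - have := subsetP hsupU x; rewrite !inE => /(_ hx) ->; rewrite andbT.
    by apply/eqP => e; subst x; rewrite Ua eqxx in hx.
  - have := subsetP (conf_supp cZ) x; rewrite !inE => /(_ hx) ->; rewrite andbT.
    by apply/eqP => e; subst x; rewrite Za eqxx in hx.
have [U' U'C [U'b U'k cU']] := IH U Z b k hsz' UC ZC Ub1 Zb Uk Zk.
apply: (IHm U') => //.
- rewrite -ltnS; apply: leq_trans hb; apply: (card_lt_sub (x := b)) => //.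
  apply/subsetP => x; rewrite !inE => /and3P [h1 h2 h3]; apply/andP; split.
    by apply/eqP => e; subst x; rewrite U'b eqxx in h1.
  case: (cU' x) => [e|[e|e]]; rewrite e in h1 h2 h3; first by rewrite eqxx in h1.
    by rewrite h1 h2 h3.
  by case: (cZ x) => [e'|[e'|e']]; rewrite e' eqxx in h1 h2 h3.
- by apply: (conf_zero (x := a) cU').
- move=> x; case: (cU' x) => [e|[e|e]]; rewrite e; first by left.
    exact: H4.
  by case: (cZ x) => [e'|[e'|e']]; rewrite e'; auto.
Qed.


Lemma supp_conf_sub (P Q Z : svec E) : conf P Q Z -> supp P :|: supp Z \subset supp P :|: supp Q.
Proof.
move=> cZ; apply/subsetP => x; rewrite inE => /orP [] h; first by rewrite inE h.
exact: (subsetP (conf_supp cZ)).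
Qed.

Lemma not_sub_P (P Z : svec E) a : P \in C -> Z \in C -> P a != Zero -> Z a = Zero ->
  exists b, Z b != Zero /\ P b = Zero.
Proof.
move=> PC ZC Pa Za.
have : ~~ (supp Z \subset supp P).
  apply/negP => sub; case: (C_supp ZC PC sub) => e.
    by move: Pa; rewrite -e Za eqxx.
  by move: Pa; rewrite -sopp_zero -snegE -e Za eqxx.
move/subsetPn => [b]; rewrite !inE => h1 /negPn /eqP h2; by exists b.
Qed.

Lemma SEB_all n : SEB_lt n.
Proof.
elim: n => [P Q a k //|n IH P Q a k hsz PC QC Pa Qa Pk Qk].
rewrite ltnS in hsz.
have PQ : P != sneg Q.
  apply/negP => /eqP e; move: Pk; by rewrite e snegE Qk eqxx.
have [Z ZC [Za cZ]] := weak' PC QC PQ Pa Qa.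
case: (Z k =P Zero) => Zk; last first.
  by exists Z => //; split => //; apply/eqP.
have [b [Zb Pb]] := not_sub_P PC ZC Pa Za.
have Qb : Q b = Z b.
  by case: (cZ b) => [e|[e|e]]; [rewrite e eqxx in Zb | rewrite e Pb eqxx in Zb | rewrite e].
have kP : k \in supp P :|: supp Q by rewrite !inE Pk.
have hsz1 : msz Q (sneg Z) < n.
  rewrite /msz supp_sneg; apply: (leq_trans _ hsz); apply: (card_lt_sub (x := k)) => //.
  apply/subsetP => x; rewrite !inE => /orP [] hx.
    rewrite hx orbT andbT; apply/eqP => e; subst x; by rewrite Qk eqxx in hx.
  have := subsetP (conf_supp cZ) x; rewrite !inE => /(_ hx) ->; rewrite andbT.
  by apply/eqP => e; subst x; rewrite Zk eqxx in hx.
have QZb : sneg Z b = sopp (Q b) by rewrite snegE Qb.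
have Qa0 : Q a != Zero by rewrite Qa sopp_zero.
have ZaN : sneg Z a = Zero by rewrite snegE Za.
have Qbn : Q b != Zero by rewrite Qb.
have [W WC [Wb Wa cW]] := IH Q (sneg Z) b a hsz1 QC (inC_neg ZC) (Qbn) QZb Qa0 ZaN.
have WaQ : W a = sopp (P a).
  by rewrite -Qa; case: (cW a) => [e|[e|e]]; [rewrite e eqxx in Wa | exact e | rewrite e ZaN eqxx in Wa].
have Wk : W k = Zero by apply: (conf_zero cW); rewrite ?snegE ?Zk.
have bQ : b \in supp P :|: supp Q by rewrite !inE Qbn orbT.
have hsz2 : msz P W < n.
  apply: (leq_trans _ hsz); apply: (card_lt_sub (x := b)) => //.
  apply/subsetP => x; rewrite !inE => /orP [] hx.
    rewrite hx andbT; apply/eqP => e; subst x; by rewrite Pb eqxx in hx.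
  have := subsetP (conf_supp cW) x; rewrite supp_sneg !inE => /(_ hx) /orP [] h.
    rewrite h orbT andbT; apply/eqP => e; subst x; by rewrite Wb eqxx in hx.
  have := subsetP (conf_supp cZ) x; rewrite !inE => /(_ h) ->; rewrite andbT.
  apply/eqP => e; subst x; by rewrite Wb eqxx in hx.
have [V0 V0C [V0a V0k cV0]] := IH P W a k hsz2 PC WC Pa WaQ Pk Wk.
apply: (fixup IH hsz Pa ZC Za Zk cZ V0C V0a V0k) => x.
case: (cV0 x) => [e|[e|e]]; rewrite e; auto.
case: (cW x) => [e'|[e'|e']]; rewrite e' ?snegE; auto.
Qed.

Definition SEA_lt n := forall P Q a k, msz P Q < n -> P \in C -> Q \in C ->
  P a != Zero -> Q a = sopp (P a) -> P k != Zero -> Q k = P k ->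
  exists2 V, V \in C & [/\ V a = Zero, V k != Zero & conf P Q V].

Lemma SEA_all n : SEA_lt n.
Proof.
elim: n => [P Q a k //|n IH P Q a k hsz PC QC Pa Qa Pk Qk].
rewrite ltnS in hsz.
have PQ : P != sneg Q.
  apply/negP => /eqP e; move: (sopp_neq Pk); by rewrite {2}e snegE Qk eqxx.
have [Z ZC [Za cZ]] := weak' PC QC PQ Pa Qa.
case: (Z k =P Zero) => Zk; last first.
  by exists Z => //; split => //; apply/eqP.
have [b [Zb Pb]] := not_sub_P PC ZC Pa Za.
have Qb : Q b = Z b.
  by case: (cZ b) => [e|[e|e]]; [rewrite e eqxx in Zb | rewrite e Pb eqxx in Zb | rewrite e].
have QZb : sneg Z b = sopp (Q b) by rewrite snegE Qb.
have Qa0 : Q a != Zero by rewrite Qa sopp_zero.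
have ZaN : sneg Z a = Zero by rewrite snegE Za.
have Qbn : Q b != Zero by rewrite Qb.
have [W WC [Wb Wa cW]] := @SEB_all (msz Q (sneg Z)).+1 Q (sneg Z) b a (ltnSn _) QC (inC_neg ZC) Qbn QZb Qa0 ZaN.
have WaQ : W a = sopp (P a).
  by rewrite -Qa; case: (cW a) => [e|[e|e]]; [rewrite e eqxx in Wa | exact e | rewrite e ZaN eqxx in Wa].
have bQ : b \in supp P :|: supp Q by rewrite !inE Qbn orbT.
have hsz2 : msz P W < n.
  apply: (leq_trans _ hsz); apply: (card_lt_sub (x := b)) => //.
  apply/subsetP => x; rewrite !inE => /orP [] hx.
    rewrite hx andbT; apply/eqP => e; subst x; by rewrite Pb eqxx in hx.
  have := subsetP (conf_supp cW) x; rewrite supp_sneg !inE => /(_ hx) /orP [] h.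
    rewrite h orbT andbT; apply/eqP => e; subst x; by rewrite Wb eqxx in hx.
  have := subsetP (conf_supp cZ) x; rewrite !inE => /(_ h) ->; rewrite andbT.
  apply/eqP => e; subst x; by rewrite Wb eqxx in hx.
have Wk : W k = Zero \/ W k = P k.
  case: (cW k) => [e|[e|e]]; rewrite e; auto; rewrite snegE Zk; auto.
have [V0 V0C [V0a V0k cV0]] : exists2 V, V \in C & [/\ V a = Zero, V k != Zero & conf P W V].
  case: Wk => Wk.
    exact: (@SEB_all (msz P W).+1 P W a k (ltnSn _) PC WC Pa WaQ Pk Wk).
  exact: (IH P W a k hsz2 PC WC Pa WaQ Pk Wk).
have IHB := @SEB_all (msz P Q).
apply: (fixup IHB (leqnn _) Pa ZC Za Zk cZ V0C V0a V0k) => x.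
case: (cV0 x) => [e|[e|e]]; rewrite e; auto.
case: (cW x) => [e'|[e'|e']]; rewrite e' ?snegE; auto.
Qed.

Lemma SE (P Q : svec E) a k : P \in C -> Q \in C ->
  P a != Zero -> Q a = sopp (P a) -> P k != Zero -> Q k != sopp (P k) ->
  exists2 V, V \in C & [/\ V a = Zero, V k != Zero & conf P Q V].
Proof.
move=> PC QC Pa Qa Pk Qk.
have : Q k = Zero \/ Q k = P k.
  by move: Pk Qk; rewrite !sgE; case: (P k); case: (Q k); auto.
case=> h.
  exact: (@SEB_all (msz P Q).+1 P Q a k (ltnSn _) PC QC Pa Qa Pk h).
exact: (@SEA_all (msz P Q).+1 P Q a k (ltnSn _) PC QC Pa Qa Pk h).
Qed.

End OMlemmas.


Section Matroid.
Variables (E : finType) (C : {set svec E}).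
Hypothesis HOM : is_OM C.

Lemma circ_nz (X : svec E) : X \in circuits C -> exists x, X x != Zero.
Proof.
rewrite inE => /and3P [nz _ _]; apply: NNPP => H; move/eqP: nz; apply.
apply/ffunP => x; rewrite ffunE; apply/eqP; apply: NNPP => Hx; apply: H; exists x; apply/negP; exact: Hx.
Qed.

Lemma circ_orth (X Y : svec E) : X \in circuits C -> Y \in C -> orth X Y.
Proof. by rewrite inE => /and3P [_ /forall_inP H _] /H. Qed.

Lemma indep0 : indep C set0.
Proof.
apply/forall_inP => X XC; apply/negP => /subsetP sub.
have [x Hx] := circ_nz XC; have := sub x; rewrite inE Hx inE; by move/(_ isT).
Qed.

Lemma rank_ge (A B : {set E}) : B \subset A -> indep C B -> #|B| <= rank C A.
Proof.
move=> sBA iB; rewrite /rank.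
by apply: (@leq_bigmax_cond _ (fun B : {set E} => (B \subset A) && indep C B) (fun B : {set E} => #|B|) B); rewrite sBA.
Qed.

Lemma rank_ex (A : {set E}) : exists B : {set E}, [/\ B \subset A, indep C B & #|B| = rank C A].
Proof.
have hpos : 0 < #|[pred B : {set E} | (B \subset A) && indep C B] : {pred {set E}}|.
  apply/card_gt0P; exists set0; by rewrite inE sub0set indep0.
case: (eq_bigmax_cond (fun B : {set E} => #|B|) hpos) => B; rewrite inE => /andP [h1 h2] h3.
by exists B; split => //; rewrite -h3.
Qed.

Lemma smul_nz s t : smul s t != Zero -> s != Zero /\ t != Zero.
Proof. by rewrite !sgE; case: s; case: t. Qed.

Lemma ext (B : {set E}) (Y : svec E) y : indep C B -> Y \in C ->
  (forall x, x \in B -> Y x = Zero) -> Y y != Zero -> indep C (y |: B) /\ y \notin B.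
Proof.
move=> iB YC HB Yy.
have yB : y \notin B by apply/negP => /HB; apply/eqP.
split => //.
apply/forall_inP => X XC; apply/negP => sub.
case yX : (X y == Zero).
  move/forall_inP: iB => /(_ X XC) /negP; apply; apply/subsetP => x xX.
  have := subsetP sub x xX; rewrite !inE => /orP [/eqP e|//]; subst x.
  by rewrite inE yX in xX.
have hint : forall e, smul (X e) (Y e) != Zero -> e = y.
  move=> e /smul_nz [h1 h2]; have := subsetP sub e; rewrite !inE h1 => /(_ isT) /orP [/eqP //|eB].
  by move: h2; rewrite HB // eqxx.
move: (circ_orth XC YC); rewrite /orth => /orP [].
  move/eqP/setP => /(_ y); by rewrite !inE yX Yy.
move=> /andP [/existsP [e1 /eqP h1] /existsP [e2 /eqP h2]].
have e1y : e1 = y by apply: hint; rewrite h1 sgE.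
have e2y : e2 = y by apply: hint; rewrite h2 sgE.
subst e1 e2; by rewrite h1 in h2.
Qed.

Lemma dep (B : {set E}) : ~~ indep C B -> exists2 X, X \in circuits C & supp X \subset B.
Proof. by move/forall_inPn => [X XC /negPn h]; exists X. Qed.

Lemma L0 (r : nat) (B : {set E}) (Y : svec E) : rank C setT = r -> indep C B -> #|B| = r ->
  Y \in C -> (forall x, x \in B -> Y x = Zero) -> False.
Proof.
move=> rE iB cB YC HB.
have [x Yx] := C_nz HOM YC.
have [i2 xB] := ext iB YC HB Yx.
have := rank_ge (subsetT (x |: B)) i2; rewrite rE cardsU1 xB cB /=.
by rewrite add1n ltnn.
Qed.

End Matroid.


Section Program.
Variables (E : finType) (f g : E) (C : {set svec E}) (r : nat).
Hypothesis fg : f != g.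
Hypothesis HP : OM_program f g C r.

Lemma HOM : is_OM C. Proof. by case: HP. Qed.
Lemma rE : rank C setT = r. Proof. by case: HP. Qed.
Lemma Ha Y : Y \in del_f f C -> nonneg Y -> Y g != Zero. Proof. by case: HP => _ _ H _ _; apply: H. Qed.
Lemma Hc X : X \in circuits C -> f \in supp X -> #|supp X| = r.+1. Proof. by case: HP => _ _ _ _ H; apply: H. Qed.

Lemma gnP x : (x \in ground_n f g) = (x != f) && (x != g). Proof. by rewrite inE. Qed.

Lemma restrE (A : {set E}) (X : svec E) x : restr A X x = if x \in A then Zero else X x.
Proof. by rewrite ffunE. Qed.

Lemma delf_R Y : Y \in del_f f C -> exists2 X, X \in C & Y = restr [set f] X.
Proof. by rewrite /del_f /deletion inE => /andP [/imsetP [X XC ->] _]; exists X. Qed.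

Lemma delf_min Y Y' : Y \in del_f f C -> Y' \in [set restr [set f] X | X in C] ->
  Y' != szero E -> supp Y' \subset supp Y -> supp Y' = supp Y.
Proof.
rewrite /del_f /deletion inE => /andP [_ /andP [_ /forall_inP H]] Y'R nz sub.
by apply/eqP; have := H Y' Y'R; rewrite nz sub.
Qed.

Definition lift_of (v : {set E}) (Y : svec E) :=
  [/\ Y \in C, forall x, x != f -> Y x != Neg, Y g = Pos &
      forall x, x \in ground_n f g -> (Y x == Zero) = (x \in v)].

Lemma node_sub_ground v : is_node f g C v -> v \subset ground_n f g.
Proof. by case=> Y _ [_ ->]; apply: subsetDl. Qed.

Lemma node_lift v : is_node f g C v -> exists Y, lift_of v Y.
Proof.
case=> Y Ydel [nn ev].
have [X XC eY] := delf_R Ydel.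
have Yg := Ha Ydel nn.
have gf : g != f by rewrite eq_sym.
have hX : forall x, x != f -> Y x = X x.
  by move=> x xf; rewrite eY restrE inE (negbTE xf).
exists X; split => //.
- move=> x xf; rewrite -hX //; by move/forallP: nn.
- move: Yg; rewrite hX //; move/forallP: nn => /(_ g); rewrite hX //.
  by rewrite !sgE; case: (X g).
- move=> x xg; rewrite ev in_setD xg andbT inE negbK -hX //.
  by move: xg; rewrite gnP => /andP [].
Qed.

Lemma node_sub v u : is_node f g C v -> is_node f g C u -> v \subset u -> v = u.
Proof.
case=> Yv Yvd [nv ev]; case=> Yu Yud [nu eu] sub.
have [Xu XuC eXu] := delf_R Yud.
have YuR : Yu \in [set restr [set f] X | X in C] by rewrite eXu; apply: imset_f.
have Yug := Ha Yud nu.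
have Yvg := Ha Yvd nv.
have Yuf : Yu f = Zero by rewrite eXu restrE inE eqxx.
have nz : Yu != szero E.
  apply/negP => /eqP e; move: Yug; by rewrite e ffunE eqxx.
have s : supp Yu \subset supp Yv.
  apply/subsetP => x; rewrite !inE => Yux.
  case: (x =P f) => [e|xf]; first by subst x; rewrite Yuf eqxx in Yux.
  case: (x =P g) => [e|xg]; first by subst x.
  have xg' : x \in ground_n f g by rewrite gnP; apply/andP; split; apply/eqP.
  apply: NNPP => h; have xv : x \in v by rewrite ev in_setD xg' andbT inE; apply/negP.
  have := subsetP sub x xv; rewrite eu in_setD => /andP [hh _]; move: hh.
  by rewrite inE Yux.
have := delf_min Yvd YuR nz s.
by rewrite ev eu => ->.
Qed.

Lemma L3 (B : {set E}) (Y : svec E) : indep C B -> #|B|.+1 = r -> f \notin B -> Y \in C ->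
  (forall x, x \in f |: B -> Y x = Zero) -> False.
Proof.
move=> iB cB fB YC HY.
case: (boolP (indep C (f |: B))) => i.
  apply: (L0 HOM rE i _ YC HY); by rewrite cardsU1 fB add1n.
have [X XC sub] := dep i.
have fX : f \in supp X.
  apply: NNPP => h; move/forall_inP: iB => /(_ X XC) /negP; apply.
  apply/subsetP => x xX; have := subsetP sub x xX; rewrite !inE => /orP [/eqP e|//].
  by rewrite e in xX; case: (h xX).
have := Hc XC fX; have := subset_leq_card sub; rewrite cardsU1 fB add1n cB => h1 h2.
by rewrite h2 ltnn in h1.
Qed.

Lemma ground_ne_f x : x \in ground_n f g -> x != f.
Proof. by rewrite gnP => /andP []. Qed.
Lemma ground_ne_g x : x \in ground_n f g -> x != g.
Proof. by rewrite gnP => /andP []. Qed.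

Lemma factA v u Yv Yu : is_node f g C v -> is_node f g C u -> v != u ->
  rank C (v :&: u) = r - 2 -> 1 < r -> lift_of v Yv -> lift_of u Yu -> Yv f != Zero.
Proof.
move=> nv nu vu rk r2 [YvC Yvn Yvg Yvz] [YuC Yun Yug Yuz].
apply/negP => /eqP Yvf.
have [B [sB iB cB]] := rank_ex C (v :&: u).
rewrite rk in cB.
have gv := node_sub_ground nv; have gu := node_sub_ground nu.
have Bvu : forall x, x \in B -> [/\ x \in v, x \in u & x \in ground_n f g].
  move=> x xB; have := subsetP sB x xB; rewrite inE => /andP [xv xu].
  by split => //; apply: (subsetP gv).
have YuB : forall x, x \in B -> Yu x = Zero.
  by move=> x /Bvu [_ xu xg]; apply/eqP; rewrite Yuz.
have H : forall x, x \in v -> Yu x = Zero.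
  move=> x xv; apply: NNPP => h; have Yux : Yu x != Zero by apply/eqP.
  have xg : x \in ground_n f g by apply: (subsetP gv).
  have [i2 xB] := ext iB YuC YuB Yux.
  apply: (L3 i2 _ _ YvC).
  - rewrite cardsU1 xB cB; lia.
  - rewrite !inE negb_or eq_sym (ground_ne_f xg) /=; apply/negP => /Bvu [_ _ /ground_ne_f].
    by rewrite eqxx.
  - move=> y; rewrite !inE => /orP [/eqP ->//|/orP [/eqP ->|/Bvu [yv _ yg]]].
      by apply/eqP; rewrite Yvz.
    by apply/eqP; rewrite Yvz.
have sub : v \subset u.
  apply/subsetP => x xv; have xg : x \in ground_n f g by apply: (subsetP gv).
  by rewrite -Yuz // H.
by move: vu; rewrite (node_sub nv nu sub) eqxx.
Qed.

Lemma core3 (B : {set E}) (Y1 Y2 Z : svec E) e : indep C B -> #|B| = r - 2 -> 1 < r ->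
  Y1 \in C -> Y2 \in C -> Z \in C ->
  (forall x, x \in B -> Y1 x = Zero) -> Y1 e != Zero ->
  (forall x, x \in B -> Y2 x = Zero) -> Y2 e = Zero -> Y2 g != Zero ->
  (forall x, x \in B -> Z x = Zero) -> Z e = Zero -> Z g = Zero -> False.
Proof.
move=> iB cB r2 Y1C Y2C ZC H1 Y1e H2 Y2e Y2g HZ Ze Zg.
have [i1 eB] := ext iB Y1C H1 Y1e.
have H2' : forall x, x \in e |: B -> Y2 x = Zero.
  by move=> x; rewrite !inE => /orP [/eqP ->|/H2].
have [i2 gB] := ext i1 Y2C H2' Y2g.
apply: (L0 HOM rE i2 _ ZC).
  rewrite cardsU1 gB cardsU1 eB cB; lia.
by move=> x; rewrite !inE => /orP [/eqP ->|/orP [/eqP ->|/HZ]].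
Qed.

Lemma core3' (B : {set E}) (Y1 Z : svec E) : indep C B -> #|B| = r - 2 -> 1 < r -> f \notin B ->
  Y1 \in C -> Z \in C ->
  (forall x, x \in B -> Y1 x = Zero) -> Y1 g != Zero ->
  (forall x, x \in B -> Z x = Zero) -> Z g = Zero -> Z f = Zero -> False.
Proof.
move=> iB cB r2 fB Y1C ZC H1 Y1g HZ Zg Zf.
have [i1 gB] := ext iB Y1C H1 Y1g.
apply: (L3 i1 _ _ ZC).
- rewrite cardsU1 gB cB; lia.
- by rewrite !inE negb_or fg.
- by move=> x; rewrite !inE => /orP [/eqP ->|/orP [/eqP ->|/HZ]].
Qed.

Definition svY (v : {set E}) (Y : svec E) :=
  [/\ Y \in C, forall x, x != f -> Y x != Neg, Y g != Zero &
      forall x, x \in ground_n f g -> (Y x == Zero) = (x \in v)].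

Lemma svY_of_Yv v Y : is_Yv f g C v Y -> svY v Y.
Proof. by case. Qed.
Lemma svY_of_lift v Y : lift_of v Y -> svY v Y.
Proof. by case=> h1 h2 h3 h4; split => //; rewrite h3 sgE. Qed.
Lemma Yv_of_lift v Y : lift_of v Y -> Y f != Zero -> is_Yv f g C v Y.
Proof. by case=> h1 h2 h3 h4 h5; split => //; rewrite h3 sgE. Qed.

Lemma inB_facts v u (B : {set E}) x : is_node f g C v -> is_node f g C u ->
  B \subset u :&: v -> x \in B -> [/\ x \in u, x \in v & x \in ground_n f g].
Proof.
move=> nv nu sB xB; have := subsetP sB x xB; rewrite inE => /andP [xu xv].
by split => //; apply: (subsetP (node_sub_ground nv)).
Qed.

Lemma factC v u Yv Yu Z e : is_node f g C v -> is_node f g C u -> rank C (u :&: v) = r - 2 -> 1 < r ->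
  svY v Yv -> svY u Yu -> Z \in C -> Z g = Zero -> conf Yu (sneg Yv) Z -> e \in u :\: v -> Z e != Zero.
Proof.
move=> nv nu rk r2 [YvC Yvn Yvg Yvz] [YuC Yun Yug Yuz] ZC Zg cZ.
rewrite in_setD => /andP [ev eu].
have eg : e \in ground_n f g by apply: (subsetP (node_sub_ground nu)).
have [B [sB iB cB]] := rank_ex C (u :&: v); rewrite rk in cB.
have Hv : forall x, x \in B -> Yv x = Zero.
  by move=> x /(inB_facts nv nu sB) [_ xv xg]; apply/eqP; rewrite Yvz.
have Hu : forall x, x \in B -> Yu x = Zero.
  by move=> x /(inB_facts nv nu sB) [xu _ xg]; apply/eqP; rewrite Yuz.
apply/negP => /eqP Ze.
apply: (core3 iB cB r2 YvC YuC ZC Hv _ Hu _ Yug _ Ze Zg).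
- by rewrite Yvz // (negbTE ev).
- by apply/eqP; rewrite Yuz.
- by move=> x xB; apply: (conf_zero cZ); [exact: Hu | rewrite snegE Hv].
Qed.

Lemma factB v u Yv Yu Z : is_node f g C v -> is_node f g C u -> rank C (u :&: v) = r - 2 -> 1 < r ->
  svY v Yv -> svY u Yu -> Z \in C -> Z g = Zero -> conf Yu (sneg Yv) Z -> Z f != Zero.
Proof.
move=> nv nu rk r2 [YvC Yvn Yvg Yvz] [YuC Yun Yug Yuz] ZC Zg cZ.
have [B [sB iB cB]] := rank_ex C (u :&: v); rewrite rk in cB.
have Hv : forall x, x \in B -> Yv x = Zero.
  by move=> x /(inB_facts nv nu sB) [_ xv xg]; apply/eqP; rewrite Yvz.
have Hu : forall x, x \in B -> Yu x = Zero.
  by move=> x /(inB_facts nv nu sB) [xu _ xg]; apply/eqP; rewrite Yuz.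
apply/negP => /eqP Zf.
apply: (core3' iB cB r2 _ YvC ZC Hv Yvg _ Zg Zf).
- apply/negP => /(inB_facts nv nu sB) [_ _ /ground_ne_f]; by rewrite eqxx.
- by move=> x xB; apply: (conf_zero cZ); [exact: Hu | rewrite snegE Hv].
Qed.

Definition good_dir v u := exists Yv Yu Z, [/\ is_Yv f g C v Yv, is_Yv f g C u Yu, Z \in C,
  Z g = Zero & conf Yv (sneg Yu) Z /\ Z f = Neg].

Lemma sign_cases (s : sign) : s = Zero \/ s = Pos \/ s = Neg.
Proof. by case: s; auto. Qed.

Lemma arc_good v u : 1 < r -> Defs.arc f g C r v u -> good_dir v u.
Proof.
move=> r2 [[nv nu vu rk] [ac|nac]].
- case: ac => Yv [Yu [Z [iYv iYu [ZC Zg hZ] HZ]]].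
  have cZ := conf_of_elim hZ.
  exists Yv, Yu, Z; split => //; split => //.
  case: (iYv) => YvC Yvn Yvf Yvg Yvz; case: (iYu) => YuC Yun Yuf Yug Yuz.
  have gv := node_sub_ground nv.
  have [e1 e1vu] : exists e1, e1 \in v :\: u.
    apply: NNPP => h; move/eqP: vu; apply; apply: node_sub => //.
    apply/subsetP => x xv; apply: NNPP => xu; apply: h; exists x; rewrite in_setD xv andbT.
    by apply/negP.
  move: (e1vu); rewrite in_setD => /andP [e1u e1v].
  have e1g : e1 \in ground_n f g by apply: (subsetP gv).
  have Ze1 : Z e1 <> Pos.
    have Yve1 : Yv e1 = Zero by apply/eqP; rewrite Yvz.
    case: (cZ e1) => [->|[->|->]]; [by [] | by rewrite Yve1 |].
    rewrite snegE; move: (Yun e1 (ground_ne_f e1g)); rewrite !sgE; by case: (Yu e1).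
  have Zfe := HZ e1 e1vu.
  case: (sign_cases (Z f)) => [Zf|[Zf|Zf]] //; last by rewrite Zf in Zfe; rewrite -Zfe in Ze1.
  exfalso.
  have Zv : forall x, x \in v -> Z x = Zero.
    move=> x xv; have xg : x \in ground_n f g by apply: (subsetP gv).
    case: (boolP (x \in u)) => xu.
      apply: (conf_zero cZ); first by apply/eqP; rewrite Yvz.
      have Yux : Yu x = Zero by apply/eqP; rewrite Yuz.
      by rewrite snegE Yux.
    by rewrite -(HZ x) // in_setD xu xv.
  have sub : supp Z \subset supp Yv.
    apply/subsetP => x; rewrite !inE => Zx.
    case: (x =P f) => [e|/eqP xf]; first by rewrite e Zf eqxx in Zx.
    case: (x =P g) => [e|/eqP xg]; first by rewrite e Zg eqxx in Zx.
    have xgn : x \in ground_n f g by rewrite gnP xf xg.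
    rewrite Yvz //; apply/negP => xv; by rewrite Zv // eqxx in Zx.
  case: (C_supp HOM ZC YvC sub) => e; move: Yvg.
    by rewrite -e Zg eqxx.
  by rewrite -sopp_zero -snegE -e Zg eqxx.
- have [Yv lv] := node_lift nv; have [Yu lu] := node_lift nu.
  have uv : u != v by rewrite eq_sym.
  have rk' : rank C (u :&: v) = r - 2 by rewrite setIC.
  have Yvf := factA nv nu vu rk r2 lv lu.
  have Yuf := factA nu nv uv rk' r2 lu lv.
  have iYv := Yv_of_lift lv Yvf; have iYu := Yv_of_lift lu Yuf.
  case: (lv) => YvC Yvn Yvg Yvz; case: (lu) => YuC Yun Yug Yuz.
  have neq : Yu != sneg (sneg Yv).
    rewrite sneg_inv; apply/negP => /eqP e; move/eqP: uv; apply; apply/setP => x.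
    case: (boolP (x \in ground_n f g)) => xg.
      by rewrite -Yuz // -Yvz // e.
    apply/idP/idP => h; move: xg; [rewrite (subsetP (node_sub_ground nu) x h) |
                                    rewrite (subsetP (node_sub_ground nv) x h)] => //.
  have Yug0 : Yu g != Zero by rewrite Yug sgE.
  have Yvg' : sneg Yv g = sopp (Yu g) by rewrite snegE Yvg Yug.
  have [Z0 Z0C [Z0g cZ0]] := weak' HOM YuC (inC_neg HOM YvC) neq Yug0 Yvg'.
  have [e [eUV Ze]] : exists e, e \in u :\: v /\ Z0 f <> Z0 e.
    apply: NNPP => h; apply: nac; exists Yu, Yv, Z0; split => //.
      by split => //; apply: elim_of_conf.
    move=> e eUV; apply: NNPP => h2; apply: h; by exists e.
  have Z0e := factC nv nu rk' r2 (svY_of_lift lv) (svY_of_lift lu) Z0C Z0g cZ0 eUV.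
  move: (eUV); rewrite in_setD => /andP [ev eu].
  have eg : e \in ground_n f g by apply: (subsetP (node_sub_ground nu)).
  have Z0eN : Z0 e = Neg.
    case: (cZ0 e) => [e'|[e'|e']]; rewrite e' in Z0e *.
    - by rewrite eqxx in Z0e.
    - have h : Yu e = Zero by apply/eqP; rewrite Yuz.
      by rewrite h eqxx in Z0e.
    - rewrite snegE; move: (Yvn e (ground_ne_f eg)) Z0e; rewrite snegE !sgE; by case: (Yv e).
  have Z0f := factB nv nu rk' r2 (svY_of_lift lv) (svY_of_lift lu) Z0C Z0g cZ0.
  have Z0fP : Z0 f = Pos.
    move: Z0f Ze; rewrite Z0eN sgE; by case: (Z0 f).
  exists Yv, Yu, (sneg Z0); split => //.
  - exact: (inC_neg HOM).
  - by rewrite snegE Z0g.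
  split.
  - by apply: conf_sym; rewrite -[Yv]sneg_inv; apply: conf_neg.
  - by rewrite snegE Z0fP.
Qed.

Definition goodY (vt : {set E}) e0 (Y : svec E) :=
  [/\ Y \in C, Y f = Zero, Y g = Zero, Y e0 = Pos & forall e', e' \in vt -> Y e' != Neg].

Lemma nonneg_pos (V P Q : svec E) x : conf P Q V -> V x != Zero -> P x != Neg -> Q x != Neg -> V x = Pos.
Proof.
move=> cV Vx Px Qx; case: (cV x) => [e|[e|e]]; rewrite e in Vx *; move: Vx.
- by rewrite eqxx.
- by move: Px; rewrite !sgE; case: (P x).
- by move: Qx; rewrite !sgE; case: (Q x).
Qed.

Lemma conf_nonneg (V P Q : svec E) x : conf P Q V -> P x != Neg -> Q x != Neg -> V x != Neg.
Proof. by move=> cV Px Qx; case: (cV x) => [->|[->|->]] //; rewrite sgE. Qed.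

Lemma finish (vt : {set E}) e0 (Z W : svec E) : Z \in C -> W \in C -> Z g = Zero -> W g = Zero -> Z f != Zero ->
  W f = sopp (Z f) -> Z e0 = Pos -> e0 \in vt -> (forall x, x \in vt -> Z x != Neg) ->
  (forall x, x \in vt -> W x != Neg) -> exists Y, goodY vt e0 Y.
Proof.
move=> ZC WC Zg Wg Zf Wf Ze0 e0vt HZ HW.
have Ze0' : Z e0 != Zero by rewrite Ze0 sgE.
have We0 : W e0 != sopp (Z e0) by rewrite Ze0; apply: HW.
have [V VC [Vf Ve0 cV]] := SE HOM ZC WC Zf Wf Ze0' We0.
exists V; split => //.
- exact: (conf_zero cV).
- by apply: (nonneg_pos cV) => //; [apply: HZ | apply: HW].
- by move=> x xvt; apply: (conf_nonneg cV); [apply: HZ | apply: HW].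
Qed.

Lemma main_e0 (vt : {set E}) e0 : is_node f g C vt -> ~ is_source f g C r vt -> ~ is_sink f g C r vt ->
  e0 \in vt -> exists Y, goodY vt e0 Y.
Proof.
move=> nvt nsrc nsnk e0vt.
have [Yv lvt] := node_lift nvt; case: (lvt) => YvC Yvn Yvg Yvz.
have gvt := node_sub_ground nvt.
have e0g : e0 \in ground_n f g by apply: (subsetP gvt).
have Yve0 : Yv e0 = Zero by apply/eqP; rewrite Yvz.
have [X Xd [Xnn Xe0]] : exists2 X, X \in del_f f C & nonneg X /\ X e0 = Pos.
  by case: HP => _ _ _ H _; apply: H.
have [Xt XtC eX] := delf_R Xd.
have hX : forall x, x != f -> X x = Xt x by move=> x xf; rewrite eX restrE inE (negbTE xf).
have gf : g != f by rewrite eq_sym.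
have Xte0 : Xt e0 = Pos by rewrite -hX // ground_ne_f.
have Xtg : Xt g = Pos.
  move: (Ha Xd Xnn); move/forallP: Xnn => /(_ g); rewrite hX // !sgE; by case: (Xt g).
have Xtn : forall x, x != f -> Xt x != Neg by move=> x xf; rewrite -hX //; move/forallP: Xnn.
have r2 : 1 < r.
  have H0 : forall x, x \in (set0 : {set E}) -> Xt x = Zero by move=> x; rewrite inE.
  have Xe0' : Xt e0 != Zero by rewrite Xte0 sgE.
  have [i1 _] := ext (indep0 C) XtC H0 Xe0'.
  have H1 : forall x, x \in e0 |: set0 -> Yv x = Zero.
    by move=> x; rewrite !inE orbF => /eqP ->.
  have Yvg0 : Yv g != Zero by rewrite Yvg sgE.
  have [i2 gn] := ext i1 YvC H1 Yvg0.
  have := rank_ge (subsetT _) i2; rewrite rE cardsU1 gn cardsU1 inE cards0 /=; exact.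
have Yvg' : sneg Yv g = sopp (Xt g) by rewrite snegE Yvg Xtg.
have Xtg0 : Xt g != Zero by rewrite Xtg sgE.
have Xte00 : Xt e0 != Zero by rewrite Xte0 sgE.
have Yve0' : sneg Yv e0 != sopp (Xt e0) by rewrite snegE Yve0 Xte0 sgE.
have [Z ZC [Zg Ze0 cZ]] := SE HOM XtC (inC_neg HOM YvC) Xtg0 Yvg' Xte00 Yve0'.
have ZvtN : forall x, x \in vt -> sneg Yv x = Zero.
  by move=> x xvt; rewrite snegE; have -> : Yv x = Zero by apply/eqP; rewrite Yvz // (subsetP gvt).
have ZP : Z e0 = Pos.
  by apply: (nonneg_pos cZ) => //; [rewrite Xte0 sgE | rewrite ZvtN // sgE].
have Zvt : forall x, x \in vt -> Z x != Neg.
  move=> x xvt; apply: (conf_nonneg cZ); first by apply: Xtn; apply: ground_ne_f; apply: (subsetP gvt).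
  by rewrite ZvtN // sgE.
case: (sign_cases (Z f)) => [Zf|[Zf|Zf]].
- by exists Z; split.
- have [w aw] : exists w, Defs.arc f g C r w vt.
    apply: NNPP => h; apply: nsrc; split => // w hw; apply: h; by exists w.
  have [Yw [Yv' [W [iYw iYv' WC Wg [cW Wf]]]]] := arc_good r2 aw.
  case: iYw => _ Ywn _ _ _; case: iYv' => _ _ _ _ Yv'z.
  apply: (finish ZC WC Zg Wg _ _ ZP e0vt Zvt).
  + by rewrite Zf sgE.
  + by rewrite Zf Wf.
  + move=> x xvt; have xg : x \in ground_n f g by apply: (subsetP gvt).
    apply: (conf_nonneg cW); first by apply: Ywn; apply: ground_ne_f.
    rewrite snegE; have -> : Yv' x = Zero by apply/eqP; rewrite Yv'z.
    by rewrite sgE.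
- have [w aw] : exists w, Defs.arc f g C r vt w.
    apply: NNPP => h; apply: nsnk; split => // w hw; apply: h; by exists w.
  have [Yv' [Yw [W [iYv' iYw WC Wg [cW Wf]]]]] := arc_good r2 aw.
  case: iYw => _ Ywn _ _ _; case: iYv' => _ _ _ _ Yv'z.
  apply: (finish ZC (inC_neg HOM WC) Zg _ _ _ ZP e0vt Zvt).
  + by rewrite snegE Wg.
  + by rewrite Zf sgE.
  + by rewrite snegE Zf Wf.
  + move=> x xvt; have xg : x \in ground_n f g by apply: (subsetP gvt).
    rewrite snegE; have Yx : Yv' x = Zero by apply/eqP; rewrite Yv'z.
    case: (cW x) => [->|[->|->]]; rewrite ?Yx ?sgE //.
    rewrite snegE; move: (Ywn x (ground_ne_f xg)); rewrite !sgE; by case: (Yw x).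
Qed.

End Program.


Lemma fold_pos (E : finType) (s : seq (svec E)) x : (forall Y, Y \in s -> Y x != Neg) ->
  (exists2 Y, Y \in s & Y x = Pos) -> foldr (@compose E) (szero E) s x = Pos.
Proof.
elim: s => [_ [Y]//|Y s IH] Hn [Y0 Y0in Y0x] /=.
rewrite ffunE; case: (Y x =P Zero) => [Yx|/eqP Yx].
  apply: IH.
    by move=> Y1 h; apply: Hn; rewrite inE h orbT.
  move: Y0in; rewrite inE => /orP [/eqP e|h]; last by exists Y0.
  by rewrite e Yx in Y0x.
have := Hn Y; rewrite inE eqxx => /(_ isT); move: Yx; rewrite !sgE; by case: (Y x).
Qed.

Unset Implicit Arguments.

Theorem lemma5p5 (E : finType) (f g : E) (C : {set svec E}) (r : nat)
    (vt : {set E}) :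
  f != g ->
  OM_program f g C r ->
  is_node f g C vt ->
  ~ is_source f g C r vt ->
  ~ is_sink f g C r vt ->
  exists Ye : E -> svec E,
    (forall e, e \in vt ->
       [/\ Ye e \in contraction C [set f; g], Ye e e = Pos &
           forall e', e' \in vt -> Ye e e' != Neg]) /\
    (covector (contraction C [set f; g])
       (foldr (@compose E) (szero E) [seq Ye e | e <- enum vt]) /\
     forall e, e \in vt ->
       foldr (@compose E) (szero E) [seq Ye e | e <- enum vt] e = Pos).
Proof.
move=> fg HP nvt nsrc nsnk.
pose Q e := fun Y : svec E => (Y \in contraction C [set f; g]) && (Y e == Pos) &&
  [forall e', (e' \in vt) ==> (Y e' != Neg)].
pose Ye e := odflt (szero E) [pick Y | Q e Y].
have HY : forall e, e \in vt -> [/\ Ye e \in contraction C [set f; g], Ye e e = Pos &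
           forall e', e' \in vt -> Ye e e' != Neg].
  move=> e ev; rewrite /Ye; case: pickP => [Y /andP [/andP [h1 /eqP h2] /forallP h3]|none] /=.
    split => // e' e'v; by move: (h3 e') => /implyP; apply.
  exfalso.
  have [Y [YC Yf Yg Ye0 Yvt]] := main_e0 fg HP nvt nsrc nsnk ev.
  move: (none Y); rewrite /Q inE YC Ye0 eqxx /=.
  have -> : [forall e0 in [set f; g], Y e0 == Zero].
    by apply/forall_inP => x; rewrite !inE => /orP [] /eqP ->; apply/eqP.
  have -> // : [forall e', (e' \in vt) ==> (Y e' != Neg)].
  by apply/forallP => x; apply/implyP; apply: Yvt.
exists Ye; split => //; split.
  exists [seq Ye e | e <- enum vt] => //.
  by apply/allP => Y /mapP [e ein ->]; rewrite mem_enum in ein; case: (HY e ein).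
move=> e ev; apply: fold_pos.
  by move=> Y /mapP [e' ein ->]; rewrite mem_enum in ein; case: (HY e' ein) => _ _; apply.
exists (Ye e); first by apply/mapP; exists e => //; rewrite mem_enum.
by case: (HY e ev).
Qed.
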